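(* Let $\{\mathcal X^\varepsilon:\varepsilon\ge 0\}$ be a Markov perturbation of a synchronized DRN $\mathcal X^0$. Then there is $\varepsilon_1>0$ such that for every $0\le\varepsilon<\varepsilon_1$ there exists an invariant distribution $p_\varepsilon:\Omega\to\Sigma_1^+$ of $\mathcal X^\varepsilon$ (i.e. $P_{\mathcal X^\varepsilon}(1,\omega)p_\varepsilon(\omega)=p_\varepsilon(\theta\omega)$ for $\mu$-a.e. $\omega$) with the following properties: (i) $p_\varepsilon$ is pull-back attracting: for every $q\in\Sigma_1^+$ and $\mu$-a.e. $\omega$, $\lim_{n\to\infty}|P_{\mathcal X^\varepsilon}(n,\theta^{-n}\omega)q-p_\varepsilon(\omega)|=0$; (ii) $p_\varepsilon$ is forward attracting: for every $q\in\Sigma_1^+$ and $\mu$-a.e. $\omega$, $\lim_{n\to\infty}|P_{\mathcal X^\varepsilon}(n,\omega)q-p_\varepsilon(\theta^n\omega)|=0$; (iii) $p_\varepsilon$ is continuous at $\varepsilon=0$: there is an $\mathcal F$-measurable $J:\Omega\to\mathbb K$ such that for $\mu$-a.e. $\omega$, $\lim_{\varepsilon\to0}p_\varepsilon(\omega)=e_{J(\omega)}=p_0(\omega)$. Moreover, if $\mathcal X^0$ is uniformly synchronized, then the convergence in (iii) is uniform on a set of full $\mu$-measure.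
   Context: Let $k\ge2$, $S=\{s_1,\dots,s_k\}$, $\mathbb K=\{1,\dots,k\}$, $e_1,\dots,e_k$ the canonical basis of $\mathbb R^k$. $|\cdot|$ denotes the $\ell^1$-norm on $\mathbb R^k$ and the induced operator norm on $\mathbb R^{k\times k}$ (max absolute column sum). For $a\in\mathbb R$, $\Sigma_a=\{v\in\mathbb R^k:\sum_jv_j=a\}$ and $\Sigma_1^+=\{v\in\Sigma_1:v_j\ge0\ \forall j\}$. $\Theta=(\Omega,\mathcal F,\mu,\theta)$ is an invertible metric dynamical system: $(\Omega,\mathcal F,\mu)$ is a standard probability space and $\theta:\Omega\to\Omega$ is invertible, ergodic and $\mu$-preserving. A Markov random network (MRN) over $\Theta$ is a stochastic process $\mathcal X=(X_n)_{n\in\mathbb N_0}$ with state space $S\times\Omega$ such that (MRN1) $\omega\mapsto\mathbb P\{X_n=(s_i,\theta^n\omega)\mid X_0=(s_j,\omega)\}$ is $\mathcal F$-measurable for all $n,i,j$; (MRN2) $\sum_{i}\mathbb P\{X_n=(s_i,\theta^{n-m}\omega)\mid X_m=(s_j,\omega)\}=1$ for all $j$, all $n\ge m$, and $\mu$-a.e. $\omega$; (MRN3) $\mathbb P\{X_{n+1}=(s_{i_{n+1}},\theta^{n+1}\omega)\mid X_n=(s_{i_n},\theta^n\omega)\}=\mathbb P\{X_{n+1}=(s_{i_{n+1}},\theta^{n+1}\omega)\mid X_0=(s_{i_0},\omega),\dots,X_n=(s_{i_n},\theta^n\omega)\}$ for all $n$, all indices, $\mu$-a.e. $\omega$. Its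 transition cocycle is $P_{\mathcal X}(n,\omega)=(p_{i,j}(n,\omega))_{i,j\in\mathbb K}$, $p_{i,j}(n,\omega)=\mathbb P\{X_n=(s_i,\theta^n\omega)\mid X_0=(s_j,\omega)\}$; for $\mu$-a.e. $\omega$ it is column-stochastic, $P_{\mathcal X}(0,\omega)=I_k$, and $P_{\mathcal X}(m+n,\omega)=P_{\mathcal X}(m,\theta^n\omega)P_{\mathcal X}(n,\omega)$. A deterministic random network (DRN) is an MRN $\mathcal X^0$ whose transition cocycle $P^0:=P_{\mathcal X^0}$ has all entries in $\{0,1\}$ for all $n$ and $\mu$-a.e. $\omega$; it defines maps $T_{\mathcal X^0}(n,\omega):S\to S$ by $T_{\mathcal X^0}(n,\omega)(s_j)=s_i$ iff $P^0(n,\omega)_{i,j}=1$. $\mathcal X^0$ is synchronized if there is an $\mathcal F$-measurable $N:\Omega\to\mathbb N$ such that for $\mu$-a.e. $\omega$ and all $i,j$, $T_{\mathcal X^0}(n,\omega)(s_i)=T_{\mathcal X^0}(n,\omega)(s_j)$ for all $n\ge N(\omega)$; it is uniformly synchronized if such $N$ can be chosen $\mu$-a.e. constant. A Markov perturbation of a DRN $\mathcal X^0$ is a family $\{\mathcal X^\varepsilon:\varepsilon\ge0\}$ of MRNs over $\Theta$ (with $\mathcal X^\varepsilon$ at $\varepsilon=0$ being $\mathcal X^0$) such that $|P_{\mathcal X^\varepsilon}(1,\omega)-P^0(1,\omega)|\le\varepsilon$ for all $\varepsilon\ge0$ and $\mu$-a.e. $\omega$. An invariant distribution of an MRN $\mathcal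 X$ is an $\mathcal F$-measurable $p:\Omega\to\Sigma_1^+$ with $P_{\mathcal X}(n,\omega)p(\omega)=p(\theta^n\omega)$ for all $n\in\mathbb N_0$ and $\mu$-a.e. $\omega$. *)

(* Defs.v *)
From HB Require Import structures.
From mathcomp Require Import all_boot all_order all_algebra.
From mathcomp Require Import all_classical all_reals all_analysis.

Set Implicit Arguments.
Unset Strict Implicit.
Unset Printing Implicit Defensive.

Import Order.TTheory GRing.Theory Num.Theory.
Import numFieldNormedType.Exports.
Local Open Scope classical_set_scope.
Local Open Scope ring_scope.

Section MRN.
Variable R : realType.

Definition norm1 {k : nat} (v : 'cV[R]_k) : R := \sum_(i < k) `|v i 0|.

Definition opnorm1 {k : nat} (A : 'M[R]_k) : R :=
  \big[Num.max/0]_(j < k) \sum_(i < k) `|A i j|.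

Definition evec {k : nat} (j : 'I_k) : 'cV[R]_k := \col_i (if i == j then 1 else 0).

Definition Sigma1p {k : nat} (v : 'cV[R]_k) : Prop :=
  \sum_(i < k) v i 0 = 1 /\ forall i, 0 <= v i 0.

Definition column_stochastic {k : nat} (A : 'M[R]_k) : Prop :=
  (forall i j, 0 <= A i j) /\ (forall j, \sum_(i < k) A i j = 1).

Context {d : measure_display} {Omega : measurableType d}.

(* standard Borel space: Borel-isomorphic to a Borel subset of the reals *)
Definition standard_borel : Prop :=
  exists f : Omega -> R, injective f /\ measurable_fun setT f /\
    measurable (range f) /\ (forall A, measurable A -> measurable (f @` A)).

Definition metric_dynamical_system (mu : probability Omega R)
  (theta theta_inv : Omega -> Omega) : Prop :=
  [/\ measurable_fun setT theta, measurable_fun setT theta_inv,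
      cancel theta theta_inv /\ cancel theta_inv theta,
      (forall A, measurable A -> mu (theta @^-1` A) = mu A) &
      (forall A, measurable A -> theta @^-1` A = A ->
         mu A = 0%E \/ mu A = 1%E)].

(* transition cocycle of a Markov random network over (mu, theta):
   P n w i j = Prob{X_n = (s_i, theta^n w) | X_0 = (s_j, w)} *)
Definition MRN_cocycle {k : nat} (mu : probability Omega R)
  (theta : Omega -> Omega) (P : nat -> Omega -> 'M[R]_k) : Prop :=
  (forall n i j, measurable_fun setT (fun w => P n w i j)) /\
  {ae mu, forall w, [/\ forall n, column_stochastic (P n w),
                       P 0%N w = 1%:M &
                       forall m n, P (m + n)%N w = P m (iter n theta w) *m P n w]}.

Definition DRN_cocycle {k : nat} (mu : probability Omega R)
  (theta : Omega -> Omega) (P : nat -> Omega -> 'M[R]_k) : Prop :=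
  MRN_cocycle mu theta P /\
  {ae mu, forall w, forall n i j, P n w i j = 0 \/ P n w i j = 1}.

Definition DRN_map {k : nat} (P : nat -> Omega -> 'M[R]_k)
  (n : nat) (w : Omega) (j : 'I_k) : 'I_k :=
  odflt j [pick i | P n w i j == 1].

Definition synchronized {k : nat} (mu : probability Omega R)
  (P : nat -> Omega -> 'M[R]_k) : Prop :=
  exists N : Omega -> nat, (forall m, measurable (N @^-1` [set m])) /\
    {ae mu, forall w, forall i j n, (N w <= n)%N ->
              DRN_map P n w i = DRN_map P n w j}.

Definition uniformly_synchronized {k : nat} (mu : probability Omega R)
  (P : nat -> Omega -> 'M[R]_k) : Prop :=
  exists N : nat,
    {ae mu, forall w, forall i j n, (N <= n)%N ->
              DRN_map P n w i = DRN_map P n w j}.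

Definition markov_perturbation {k : nat} (mu : probability Omega R)
  (theta : Omega -> Omega) (P0 : nat -> Omega -> 'M[R]_k)
  (P : R -> nat -> Omega -> 'M[R]_k) : Prop :=
  P 0 = P0 /\
  forall eps, 0 <= eps ->
    MRN_cocycle mu theta (P eps) /\
    {ae mu, forall w, opnorm1 (P eps 1%N w - P0 1%N w) <= eps}.

Definition invariant_distribution {k : nat} (mu : probability Omega R)
  (theta : Omega -> Omega) (P : nat -> Omega -> 'M[R]_k)
  (p : Omega -> 'cV[R]_k) : Prop :=
  (forall i, measurable_fun setT (fun w => p w i 0)) /\
  (forall w, Sigma1p (p w)) /\
  {ae mu, forall w, forall n, P n w *m p w = p (iter n theta w)}.

End MRN.

(* Main.v *)
Require Import Defs.
From HB Require Import structures.
From mathcomp Require Import all_boot all_order all_algebra.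
From mathcomp Require Import all_classical all_reals all_analysis.
From mathcomp Require Import ring lra zify.
From mathcomp Require Import measurable_realfun.
Import Order.TTheory GRing.Theory Num.Theory.
Import numFieldNormedType.Exports.
Set Implicit Arguments.
Unset Strict Implicit.
Unset Printing Implicit Defensive.
Local Open Scope classical_set_scope.
Local Open Scope ring_scope.

Section LinAlg.
Variable R : realType.
Variable k : nat.
Implicit Types (A B E : 'M[R]_k) (u v : 'cV[R]_k).

Definition sumv v : R := \sum_(i < k) v i 0.
Definition stoch A := column_stochastic A.
Definition Contr A (c : R) := forall v, sumv v = 0 -> norm1 (A *m v) <= c * norm1 v.

Lemma norm1_ge0 v : 0 <= norm1 v.
Proof. by apply: sumr_ge0 => i _. Qed.

Lemma norm1D u v : norm1 (u + v) <= norm1 u + norm1 v.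
Proof.
rewrite /norm1 -big_split /=; apply: ler_sum => i _; rewrite mxE; exact: ler_normD.
Qed.

Lemma norm1N v : norm1 (- v) = norm1 v.
Proof. by apply: eq_bigr => i _; rewrite mxE normrN. Qed.

Lemma norm1B u v : norm1 (u - v) = norm1 (v - u).
Proof. by rewrite -norm1N opprB. Qed.

Lemma norm1Z (a : R) v : norm1 (a *: v) = `|a| * norm1 v.
Proof. by rewrite /norm1 mulr_sumr; apply: eq_bigr => i _; rewrite mxE normrM. Qed.

Lemma norm1_coord v i : `|v i 0| <= norm1 v.
Proof.
rewrite /norm1 (bigD1 i) //= lerDl; by apply: sumr_ge0 => j _.
Qed.

Lemma opnorm1_ge0 A : 0 <= opnorm1 A.
Proof.
rewrite /opnorm1; elim/big_ind: _ => //= [x y hx hy|j _].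
  by rewrite le_max hx.
by apply: sumr_ge0.
Qed.

Lemma col_le_opnorm A j : \sum_(i < k) `|A i j| <= opnorm1 A.
Proof. exact: (le_bigmax 0 (fun j => \sum_(i < k) `|A i j|) j). Qed.

Lemma opnorm1_le A (c : R) : 0 <= c -> (forall j, \sum_(i < k) `|A i j| <= c) ->
  opnorm1 A <= c.
Proof. by move=> c0 h; apply: bigmax_le => // j _; exact: h. Qed.

Lemma norm1_mul A v : norm1 (A *m v) <= opnorm1 A * norm1 v.
Proof.
rewrite /norm1.
apply: (@le_trans _ _ (\sum_(i < k) \sum_(j < k) `|A i j| * `|v j 0|)).
  apply: ler_sum => i _; rewrite mxE.
  apply: (le_trans (ler_norm_sum _ _ _)); apply: ler_sum => j _.
  by rewrite normrM.
rewrite exchange_big /= mulr_sumr; apply: ler_sum => j _.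
rewrite -mulr_suml; apply: ler_wpM2r => //; exact: col_le_opnorm.
Qed.

Lemma opnorm1_mul A B : opnorm1 (A *m B) <= opnorm1 A * opnorm1 B.
Proof.
apply: opnorm1_le; first by rewrite mulr_ge0 // opnorm1_ge0.
move=> j.
have := norm1_mul A (col j B).
rewrite /norm1.
have -> : \sum_(i < k) `|(A *m col j B) i 0| = \sum_(i < k) `|(A *m B) i j|.
  by apply: eq_bigr => i _; rewrite !mxE; congr `|_|; apply: eq_bigr => l _; rewrite mxE.
move/le_trans; apply; apply: ler_wpM2l; first exact: opnorm1_ge0.
have -> : \sum_(i < k) `|col j B i 0| = \sum_(i < k) `|B i j|.
  by apply: eq_bigr => i _; rewrite mxE.
exact: col_le_opnorm.
Qed.

Lemma opnorm1_add A B : opnorm1 (A + B) <= opnorm1 A + opnorm1 B.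
Proof.
apply: opnorm1_le; first by rewrite addr_ge0 // opnorm1_ge0.
move=> j; apply: le_trans (lerD (col_le_opnorm A j) (col_le_opnorm B j)).
rewrite -big_split /=; apply: ler_sum => i _; rewrite mxE; exact: ler_normD.
Qed.

Lemma stoch_opnorm A : stoch A -> opnorm1 A <= 1.
Proof.
move=> [h0 h1]; apply: opnorm1_le => // j.
rewrite -(h1 j) le_eqVlt; apply/orP; left; apply/eqP/eq_bigr => i _; rewrite ger0_norm //.
Qed.

Lemma sumv_mul A v : stoch A -> sumv (A *m v) = sumv v.
Proof.
move=> [h0 h1]; rewrite /sumv.
under eq_bigr do rewrite mxE.
rewrite exchange_big /=; apply: eq_bigr => j _.
by rewrite -mulr_suml h1 mul1r.
Qed.

Lemma sumvD u v : sumv (u + v) = sumv u + sumv v.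
Proof. by rewrite /sumv -big_split; apply: eq_bigr => i _; rewrite mxE. Qed.

Lemma sumvN v : sumv (- v) = - sumv v.
Proof. by rewrite /sumv -sumrN; apply: eq_bigr => i _; rewrite mxE. Qed.

Lemma sumvB u v : sumv (u - v) = sumv u - sumv v.
Proof. by rewrite sumvD sumvN. Qed.

Lemma Sigma1p_sumv v : Sigma1p v -> sumv v = 1.
Proof. by case. Qed.

Lemma Sigma1p_norm1 v : Sigma1p v -> norm1 v = 1.
Proof.
move=> [h1 h0]; rewrite -h1; apply: eq_bigr => i _; exact: ger0_norm.
Qed.

Lemma stoch_Sigma A v : stoch A -> Sigma1p v -> Sigma1p (A *m v).
Proof.
move=> hA hv; split; first by rewrite -/(sumv _) sumv_mul // Sigma1p_sumv.
move=> i; rewrite mxE; apply: sumr_ge0 => j _; apply: mulr_ge0.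
  by case: hA.
by case: hv.
Qed.

Lemma Contr_stoch A : stoch A -> Contr A 1.
Proof.
move=> hA v _; rewrite mul1r; apply: le_trans (norm1_mul A v) _.
rewrite -[X in _ <= X]mul1r; apply: ler_wpM2r; first exact: norm1_ge0.
exact: stoch_opnorm.
Qed.

Lemma Contr_mul A B (a b : R) : Contr A a -> Contr B b -> stoch B -> 0 <= a ->
  Contr (A *m B) (a * b).
Proof.
move=> hA hB sB a0 v v0; rewrite -mulmxA.
apply: le_trans (hA _ _) _; first by rewrite sumv_mul.
rewrite -mulrA; apply: ler_wpM2l => //; exact: hB.
Qed.

Lemma Contr_near A E (d : R) : (forall v, sumv v = 0 -> E *m v = 0) ->
  opnorm1 (A - E) <= d -> Contr A d.
Proof.
move=> hE hd v v0.
have -> : A *m v = (A - E) *m v by rewrite mulmxBl hE // subr0.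
apply: le_trans (norm1_mul _ _) _; apply: ler_wpM2r => //; exact: norm1_ge0.
Qed.

Definition RankOne E (J : 'I_k) := forall v, E *m v = sumv v *: evec R J.

Lemma RankOne_zero E J v : RankOne E J -> sumv v = 0 -> E *m v = 0.
Proof. by move=> h v0; rewrite h v0 scale0r. Qed.

Lemma sumv_evec (J : 'I_k) : sumv (evec R J) = 1.
Proof.
rewrite /sumv (bigD1 J) //= big1 ?mxE ?eqxx ?addr0 // => i /negbTE h.
by rewrite mxE h.
Qed.

Lemma Sigma1p_evec (J : 'I_k) : Sigma1p (evec R J).
Proof.
split; first exact: sumv_evec.
by move=> i; rewrite mxE; case: ifP.
Qed.

Definition colmap A (j : 'I_k) : 'I_k := odflt j [pick i | A i j == 1].

Lemma col01 A : stoch A -> (forall i j, A i j = 0 \/ A i j = 1) ->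
  forall i j, A i j = (i == colmap A j)%:R.
Proof.
move=> [h0 h1] h01 i j; rewrite /colmap.
case: pickP => [i1 /eqP Hi1|Hn] /=.
  have others : forall i', i' != i1 -> A i' j = 0.
    move=> i' ne; case: (h01 i' j) => // e1.
    have := h1 j; rewrite (bigD1 i1) //= (bigD1 i') //= Hi1 e1 addrA.
    move=> /eqP; rewrite -subr_eq0 addrAC addrK => /eqP h.
    have : 0 < 1 + \sum_(i0 < k | (i0 != i1) && (i0 != i')) A i0 j.
      apply: (@lt_le_trans _ _ 1) => //; rewrite lerDl.
      by apply: sumr_ge0.
    by rewrite h ltxx.
  case: (eqVneq i i1) => [->|ne]; first by rewrite Hi1.
  by rewrite others.
exfalso.
have : \sum_(i < k) A i j = 0.
  by apply: big1 => i' _; case: (h01 i' j) => // e; move: (Hn i'); rewrite e eqxx.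
by rewrite h1 => /eqP; rewrite oner_eq0.
Qed.

Lemma col01_rank A (J : 'I_k) : stoch A -> (forall i j, A i j = 0 \/ A i j = 1) ->
  (forall j, colmap A j = J) -> RankOne A J.
Proof.
move=> sA h01 hJ v; apply/matrixP => i z; rewrite (ord1 z) !mxE /sumv mulr_suml.
apply: eq_bigr => j _; rewrite (col01 sA h01) hJ mulrC.
by case: eqP.
Qed.

Lemma col01_evec A (J : 'I_k) : stoch A -> (forall i j, A i j = 0 \/ A i j = 1) ->
  A *m evec R J = evec R (colmap A J).
Proof.
move=> sA h01; apply/matrixP => i z; rewrite (ord1 z) !mxE.
rewrite (bigD1 J) //= big1 ?addr0; last first.
  by move=> j /negbTE h; rewrite mxE h mulr0.
rewrite mxE eqxx mulr1 (col01 sA h01); by case: eqP.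
Qed.

End LinAlg.

Lemma seq_cauchy_cvg (R : realType) (u : nat -> R) :
  (forall e, 0 < e -> exists n0, forall n, (n0 <= n)%N -> `|u n0 - u n| < e) ->
  u @ \oo --> lim (u @ \oo).
Proof.
move=> h.
have : cauchy (u @ \oo).
  apply: cauchy_exP => e e0.
  have [n0 hn0] := h e e0.
  by exists (u n0); exists n0 => //.
by move/cauchy_cvgP.
Qed.

Lemma tri_sub (V : zmodType) (l c x : V) : l - c = (x - c) - (x - l).
Proof. by rewrite opprB [RHS]addrC addrA subrK. Qed.

Lemma eventually_ex (P : nat -> Prop) (n0 : nat) :
  (\forall n \near \oo, P n) -> exists n, (n0 <= n)%N /\ P n.
Proof.
case=> N _ hN; exists (maxn N n0); split; first exact: leq_maxr.
by apply: hN; rewrite /= leq_maxl.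
Qed.

Section Conv.
Variable R : realType.
Variable k : nat.
Implicit Types (A : 'M[R]_k) (x y : nat -> 'cV[R]_k) (l c : 'cV[R]_k).

Definition Conv x l := forall e, 0 < e -> exists n0, forall n, (n0 <= n)%N ->
  norm1 (x n - l) <= e.

Definition vlim x : 'cV[R]_k := \col_i lim ((fun n => x n i 0) @ \oo).

Lemma vec_cauchy_comp x :
  (forall e, 0 < e -> exists n0, forall n m, (n0 <= n)%N -> (n0 <= m)%N ->
     norm1 (x n - x m) <= e) ->
  forall i, (fun n => x n i 0) @ \oo --> lim ((fun n => x n i 0) @ \oo).
Proof.
move=> h i; apply: seq_cauchy_cvg => e e0.
have e2 : 0 < e / 2 by rewrite divr_gt0.
have [n0 hn0] := h (e / 2) e2.
exists n0 => n hn.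
apply: (@le_lt_trans _ _ (e / 2)); last by rewrite ltr_pdivrMr // ltr_pMr // ltr1n.
apply: le_trans (hn0 n0 n (leqnn _) hn).
by have := norm1_coord (x n0 - x n) i; rewrite !mxE.
Qed.

Lemma vec_cauchy x :
  (forall e, 0 < e -> exists n0, forall n m, (n0 <= n)%N -> (n0 <= m)%N ->
     norm1 (x n - x m) <= e) ->
  Conv x (vlim x).
Proof.
move=> h e e0.
set e' := e / (k.+1)%:R.
have e'0 : 0 < e' by rewrite divr_gt0.
have [n0 hn0] := h e' e'0.
exists n0 => n hn.
have comp : forall i, `|x n i 0 - vlim x i 0| <= e'.
  move=> i; rewrite !mxE.
  have cv := @vec_cauchy_comp x h i.
  apply/ler_addgt0Pr => d d0.
  have := cv; rewrite cvgrPdist_lt => /(_ d d0) ev.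
  have [m [hm hmd]] := eventually_ex n0 ev.
  set l := lim _ in hmd *.
  have -> : x n i 0 - l = (x n i 0 - x m i 0) + (x m i 0 - l) by rewrite addrA subrK.
  apply: (le_trans (ler_normD _ _)); apply: lerD.
    apply: le_trans (hn0 n m hn hm).
    by have := norm1_coord (x n - x m) i; rewrite !mxE.
  by rewrite distrC ltW.
apply: (@le_trans _ _ (\sum_(i < k) e')).
  by rewrite /norm1; apply: ler_sum => i _; move: (comp i); rewrite !mxE.
rewrite sumr_const card_ord -mulr_natl /e' mulrA ler_pdivrMr // [_ * e]mulrC.
by apply: ler_wpM2l; [exact: ltW | rewrite ler_nat].
Qed.

Lemma Conv_close x l c (b : R) n0 : Conv x l ->
  (forall n, (n0 <= n)%N -> norm1 (x n - c) <= b) -> norm1 (l - c) <= b.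
Proof.
move=> cv hb; apply/ler_addgt0Pr => e e0.
have [n1 hn1] := cv e e0.
set n := maxn n0 n1.
rewrite (tri_sub l c (x n)).
apply: (le_trans (norm1D _ _)); rewrite norm1N; apply: lerD.
  by apply: hb; rewrite leq_maxl.
by apply: hn1; rewrite leq_maxr.
Qed.

Lemma Conv_uniq x l l' : Conv x l -> Conv x l' -> l = l'.
Proof.
move=> h h'.
have : norm1 (l - l') <= 0.
  apply/ler_addgt0Pr => e e0; rewrite add0r.
  have [n1 hn1] := h' e e0.
  exact: (Conv_close (n0 := n1) h).
move=> h0; apply/eqP; rewrite -subr_eq0; apply/eqP/matrixP => i j.
rewrite (ord1 j) [RHS]mxE; apply/eqP; rewrite -normr_le0.
apply: le_trans h0; exact: norm1_coord.
Qed.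

Lemma Conv_shift x l a : Conv x l -> Conv (fun n => x (n + a)%N) l.
Proof.
move=> h e e0; have [n0 hn0] := h e e0; exists n0 => n hn.
by apply: hn0; apply: leq_trans hn (leq_addr _ _).
Qed.

Lemma Conv_ext x y l n1 : (forall n, (n1 <= n)%N -> x n = y n) -> Conv x l -> Conv y l.
Proof.
move=> hxy h e e0; have [n0 hn0] := h e e0; exists (maxn n0 n1) => n hn.
rewrite -hxy; last by apply: leq_trans hn; rewrite leq_maxr.
by apply: hn0; apply: leq_trans hn; rewrite leq_maxl.
Qed.

Lemma Conv_mul A x l : Conv x l -> Conv (fun n => A *m x n) (A *m l).
Proof.
move=> h e e0.
have hp : 0 < opnorm1 A + 1.
  by have := opnorm1_ge0 A; lra.
have [n0 hn0] := h (e / (opnorm1 A + 1)) (divr_gt0 e0 hp).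
exists n0 => n hn; rewrite -mulmxBr.
apply: le_trans (norm1_mul _ _) _.
apply: (@le_trans _ _ ((opnorm1 A + 1) * (e / (opnorm1 A + 1)))).
  apply: (ler_pM (opnorm1_ge0 A) (norm1_ge0 _)); last exact: hn0.
  by rewrite lerDl.
rewrite mulrC -mulrA mulVf ?mulr1 //.
by rewrite gt_eqF.
Qed.

Lemma Conv_Sigma x l : (forall n, Sigma1p (x n)) -> Conv x l -> Sigma1p l.
Proof.
move=> hx h; split.
  apply/eqP; rewrite -subr_eq0 -normr_le0; apply/ler_addgt0Pr => e e0.
  rewrite add0r.
  have [n0 hn0] := h e e0.
  have := hn0 n0 (leqnn _).
  rewrite -(Sigma1p_sumv (hx n0)) -/(sumv l) => h1.
  rewrite -normrN opprB -sumvB; apply: le_trans h1.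
  rewrite /sumv /norm1; apply: le_trans (ler_norm_sum _ _ _) _.
  by apply: ler_sum => i _.
move=> i; apply/ler_addgt0Pr => e e0.
have [n0 hn0] := h e e0.
have := hn0 n0 (leqnn _) => h1.
have h2 := norm1_coord (x n0 - l) i.
rewrite !mxE in h2.
have h3 := (proj2 (hx n0)) i.
have h4 := ler_norm (x n0 i 0 - l i 0).
lra.
Qed.

Lemma Conv_cvg0 (y : nat -> R) : (forall n, 0 <= y n) ->
  (forall e, 0 < e -> exists n0, forall n, (n0 <= n)%N -> y n <= e) ->
  y @ \oo --> (0 : R).
Proof.
move=> y0 h; apply/cvgr0Pnorm_le => e e0.
have [n0 hn0] := h e e0; exists n0 => // n /= hn.
by rewrite ger0_norm //; apply: hn0.
Qed.

End Conv.

Lemma half_pow_small (R : realType) (e : R) : 0 < e ->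
  exists L : nat, 2 * (1/2 : R) ^+ L <= e.
Proof.
move=> e0.
have cv : (GRing.exp (1/2 : R) : R ^nat) @ \oo --> 0.
  apply: cvg_expr; rewrite ger0_norm; lra.
move/cvgr0Pnorm_le: cv => /(_ (e / 2)) ev.
have e2 : 0 < e / 2 by lra.
have [L [_ hL]] := eventually_ex 0 (ev e2).
exists L; rewrite ger0_norm in hL; last by apply: exprn_ge0; lra.
lra.
Qed.

Section Orbit.
Variable R : realType.
Variable k : nat.
Hypothesis hk : (0 < k)%N.
Variables Q Q0 : nat -> int -> 'M[R]_k.
Variable eps : R.
Variable M : nat.
Variable Nf : int -> nat.
Hypothesis hQs : forall n z, stoch (Q n z).
Hypothesis hQc : forall z m n, Q (m + n)%N z = Q m (z + n%:Z) *m Q n z.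
Hypothesis hQ0s : forall n z, stoch (Q0 n z).
Hypothesis hQ0c : forall z m n, Q0 (m + n)%N z = Q0 m (z + n%:Z) *m Q0 n z.
Hypothesis hQ1 : forall z, Q 0 z = 1%:M.
Hypothesis hQ01 : forall z, Q0 0 z = 1%:M.
Hypothesis hD : forall n z i j, Q0 n z i j = 0 \/ Q0 n z i j = 1.
Hypothesis hP : forall z, opnorm1 (Q 1 z - Q0 1 z) <= eps.
Hypothesis hS : forall z n, (Nf z <= n)%N -> forall i j,
  colmap (Q0 n z) i = colmap (Q0 n z) j.
Hypothesis heps : 0 <= eps.

Let j0 : 'I_k := Ordinal hk.

Lemma opnorm1_0 : opnorm1 (0 : 'M[R]_k) <= 0.
Proof.
apply: opnorm1_le => // j; rewrite big1 // => i _; by rewrite mxE normr0.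
Qed.

Lemma split1 (A B C D : 'M[R]_k) :
  A *m B - C *m D = (A - C) *m B + C *m (B - D).
Proof. by rewrite mulmxBl mulmxBr addrA subrK. Qed.

Lemma pert n z : opnorm1 (Q n z - Q0 n z) <= n%:R * eps.
Proof.
elim: n z => [|n IH] z.
  by rewrite hQ1 hQ01 subrr mul0r opnorm1_0.
have -> : Q n.+1 z = Q 1 (z + n%:Z) *m Q n z by rewrite -hQc.
have -> : Q0 n.+1 z = Q0 1 (z + n%:Z) *m Q0 n z by rewrite -hQ0c.
rewrite split1; apply: le_trans (opnorm1_add _ _) _.
have h1 := opnorm1_mul (Q 1 (z + n%:Z) - Q0 1 (z + n%:Z)) (Q n z).
have h2 := opnorm1_mul (Q0 1 (z + n%:Z)) (Q n z - Q0 n z).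
have h3 := hP (z + n%:Z).
have h4 := stoch_opnorm (hQs n z).
have h5 := stoch_opnorm (hQ0s 1 (z + n%:Z)).
have h6 := IH z.
have h7 := opnorm1_ge0 (Q 1 (z + n%:Z) - Q0 1 (z + n%:Z)).
have h8 := opnorm1_ge0 (Q n z - Q0 n z).
have h9 := opnorm1_ge0 (Q0 1 (z + n%:Z)).
have h10 := opnorm1_ge0 (Q n z).
rewrite -natr1 mulrDl mul1r.
set a := opnorm1 (Q 1 (z + n%:Z) - Q0 1 (z + n%:Z)) in h1 h3 h7 *.
set b := opnorm1 (Q n z) in h1 h4 h10.
set c := opnorm1 (Q0 1 (z + n%:Z)) in h2 h5 h9.
set d := opnorm1 (Q n z - Q0 n z) in h2 h6 h8.
have : a * b <= eps by nra.
have : c * d <= n%:R * eps by nra.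
lra.
Qed.

Lemma Contr_weaken (A : 'M[R]_k) (a b : R) : Contr A a -> a <= b -> Contr A b.
Proof.
move=> h ab v v0; apply: le_trans (h v v0) _; apply: ler_wpM2r => //.
exact: norm1_ge0.
Qed.

Lemma rank z n : (Nf z <= n)%N -> RankOne (Q0 n z) (colmap (Q0 n z) j0).
Proof.
move=> hn; apply: col01_rank; [exact: hQ0s | move=> i j; exact: hD | ].
by move=> j; apply: hS.
Qed.

Hypothesis hMe : M%:R * eps <= 1/2.

Lemma block z : (Nf z <= M)%N -> Contr (Q M z) (1/2).
Proof.
move=> hz; apply: (@Contr_near _ _ _ (Q0 M z)).
  by move=> v v0; apply: RankOne_zero (rank hz) v0.
exact: le_trans (pert M z) hMe.
Qed.

Hypothesis hVb : forall m, exists s, (m <= s)%N /\ (Nf (- s%:Z) <= M)%N.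
Hypothesis hVf : forall m, exists t, (m <= t)%N /\ (Nf t%:Z <= M)%N.

Lemma bk L : exists n0, forall n, (n0 <= n)%N -> Contr (Q n (- n%:Z)) ((1/2) ^+ L).
Proof.
elim: L => [|L [n0 IH]].
  by exists 0%N => n _; rewrite expr0; apply: Contr_stoch.
have [s [hs hNs]] := hVb (n0 + M).
exists s => n hn.
have e1 : Q n (- n%:Z) = Q (s - M) (- (s - M)%N%:Z) *m Q (n - s + M) (- n%:Z).
  have -> : (- (s - M)%N%:Z) = (- n%:Z + (n - s + M)%N%:Z) by lia.
  by rewrite -hQc; congr Q; lia.
have e2 : Q (n - s + M) (- n%:Z) = Q M (- s%:Z) *m Q (n - s) (- n%:Z).
  have -> : (- s%:Z) = (- n%:Z + (n - s)%N%:Z) by lia.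
  by rewrite -hQc; congr Q; lia.
rewrite e1 e2.
rewrite exprSr -[_ * (1/2)]mulr1 -mulrA.
apply: Contr_mul.
- by apply: IH; lia.
- apply: Contr_mul; [exact: block | exact: Contr_stoch | exact: hQs | lra].
- by rewrite -e2.
- by apply: exprn_ge0; lra.
Qed.

Lemma fw L : exists n0, forall n, (n0 <= n)%N -> Contr (Q n 0) ((1/2) ^+ L).
Proof.
elim: L => [|L [n0 IH]].
  by exists 0%N => n _; rewrite expr0; apply: Contr_stoch.
have [t [ht hNt]] := hVf n0.
exists (t + M)%N => n hn.
have e1 : Q n 0 = Q (n - (t + M)) (t + M)%N%:Z *m Q (M + t) 0.
  have -> : (t + M)%N%:Z = 0 + (M + t)%N%:Z by lia.
  by rewrite -hQc; congr Q; lia.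
have e2 : Q (M + t) 0 = Q M t%:Z *m Q t 0.
  by rewrite hQc add0r.
rewrite e1 e2.
rewrite exprS -[(1/2) * _]mul1r.
apply: Contr_mul.
- exact: Contr_stoch.
- apply: Contr_mul; [exact: block | by apply: IH | exact: hQs | lra].
- by rewrite -e2.
- lra.
Qed.

Variable q0 : 'cV[R]_k.
Hypothesis hq0 : Sigma1p q0.

Definition xs n := Q n (- n%:Z) *m q0.

Lemma xs_Sigma n : Sigma1p (xs n).
Proof. exact: stoch_Sigma. Qed.

Lemma norm1_diff_Sigma (u v : 'cV[R]_k) : Sigma1p u -> Sigma1p v ->
  norm1 (u - v) <= 2 /\ sumv (u - v) = 0.
Proof.
move=> hu hv; split; last by rewrite sumvB !Sigma1p_sumv // subrr.
apply: le_trans (norm1D _ _) _; rewrite norm1N !Sigma1p_norm1 //; lra.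
Qed.

Lemma xs_shift n d : xs (n + d) = Q n (- n%:Z) *m (Q d (- (n + d)%N%:Z) *m q0).
Proof.
rewrite /xs mulmxA; congr (_ *m _).
have -> : (- n%:Z) = (- (n + d)%N%:Z + d%:Z) by lia.
by rewrite -hQc.
Qed.

Lemma cauchy_xs e : 0 < e -> exists n0, forall n m, (n0 <= n)%N -> (n0 <= m)%N ->
  norm1 (xs n - xs m) <= e.
Proof.
move=> e0; have [L hL] := half_pow_small e0.
have [n0 hn0] := bk L.
have key : forall n d, (n0 <= n)%N -> norm1 (xs (n + d) - xs n) <= e.
  move=> n d hn; rewrite xs_shift /xs -mulmxBr.
  have [h1 h2] := norm1_diff_Sigma (stoch_Sigma (hQs d (- (n + d)%N%:Z)) hq0) hq0.
  apply: le_trans (hn0 n hn _ h2) _.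
  have : 0 <= (1/2 : R) ^+ L by apply: exprn_ge0; lra.
  nra.
exists n0 => n m hn hm.
case: (leqP n m) => nm.
  rewrite norm1B; have -> : m = (n + (m - n))%N by lia.
  exact: key.
have -> : n = (m + (n - m))%N by lia.
exact: key.
Qed.

Definition lx := vlim xs.

Lemma comp_xs i : (fun n => xs n i 0) @ \oo --> lim ((fun n => xs n i 0) @ \oo).
Proof. exact: vec_cauchy_comp cauchy_xs i. Qed.

Lemma Conv_xs : Conv xs lx.
Proof. exact: vec_cauchy cauchy_xs. Qed.

Lemma Sigma_lx : Sigma1p lx.
Proof. exact: Conv_Sigma xs_Sigma Conv_xs. Qed.

Lemma pull (q : 'cV[R]_k) : Sigma1p q ->
  (fun n => norm1 (Q n (- n%:Z) *m q - lx)) @ \oo --> (0 : R).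
Proof.
move=> hq; apply: Conv_cvg0 => [n|e e0]; first exact: norm1_ge0.
have e2 : 0 < e / 2 by lra.
have [L hL] := half_pow_small e2.
have [n0 hn0] := bk L.
have [n1 hn1] := Conv_xs e2.
exists (maxn n0 n1) => n hn.
have -> : Q n (- n%:Z) *m q - lx = Q n (- n%:Z) *m (q - q0) + (xs n - lx).
  by rewrite mulmxBr /xs addrA subrK.
apply: le_trans (norm1D _ _) _.
have [h1 h2] := norm1_diff_Sigma hq hq0.
have h3 := hn0 n (leq_trans (leq_maxl _ _) hn) _ h2.
have h4 := hn1 n (leq_trans (leq_maxr _ _) hn).
have : 0 <= (1/2 : R) ^+ L by apply: exprn_ge0; lra.
have := norm1_ge0 (q - q0).
nra.
Qed.

Lemma inv_abs (a : nat) (l' : 'cV[R]_k) :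
  Conv (fun n => Q n (a%:Z - n%:Z) *m q0) l' -> Q a 0 *m lx = l'.
Proof.
move=> h.
have h1 := Conv_mul (Q a 0) Conv_xs.
have h2 := Conv_shift a h.
apply: (Conv_uniq h1); apply: (Conv_ext (n1 := 0%N) _ h2) => n _.
rewrite /xs mulmxA; congr (_ *m _).
have -> : (a%:Z - (n + a)%N%:Z) = - n%:Z by lia.
rewrite addnC hQc; congr (Q a _ *m _); lia.
Qed.

Lemma forward (q : 'cV[R]_k) : Sigma1p q ->
  (fun n => norm1 (Q n 0 *m q - Q n 0 *m lx)) @ \oo --> (0 : R).
Proof.
move=> hq; apply: Conv_cvg0 => [n|e e0]; first exact: norm1_ge0.
have [L hL] := half_pow_small e0.
have [n0 hn0] := fw L.
exists n0 => n hn.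
rewrite -mulmxBr.
have [h1 h2] := norm1_diff_Sigma hq Sigma_lx.
have h3 := hn0 n hn _ h2.
have : 0 <= (1/2 : R) ^+ L by apply: exprn_ge0; lra.
nra.
Qed.

Lemma close (s : nat) : (Nf (- s%:Z) <= s)%N ->
  norm1 (lx - evec R (colmap (Q0 s (- s%:Z)) j0)) <= s%:R * eps.
Proof.
move=> hs; apply: (Conv_close (n0 := s) Conv_xs) => m hm.
have -> : xs m = xs (s + (m - s)) by congr xs; lia.
rewrite xs_shift.
set r := Q (m - s) _ *m q0.
have hr : Sigma1p r by exact: stoch_Sigma.
have -> : evec R (colmap (Q0 s (- s%:Z)) j0) = Q0 s (- s%:Z) *m r.
  by rewrite (rank hs) Sigma1p_sumv // scale1r.
rewrite -mulmxBl; apply: le_trans (norm1_mul _ _) _.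
rewrite Sigma1p_norm1 // mulr1; exact: pert.
Qed.

End Orbit.

Record OrbitOK (R : realType) (k : nat) (Q Q0 : nat -> int -> 'M[R]_k) (eps : R)
    (M : nat) (Nf : int -> nat) : Prop := {
  o_Qs : forall n z, stoch (Q n z);
  o_Qc : forall z m n, Q (m + n)%N z = Q m (z + n%:Z) *m Q n z;
  o_Q0s : forall n z, stoch (Q0 n z);
  o_Q0c : forall z m n, Q0 (m + n)%N z = Q0 m (z + n%:Z) *m Q0 n z;
  o_Q1 : forall z, Q 0 z = 1%:M;
  o_Q01 : forall z, Q0 0 z = 1%:M;
  o_D : forall n z i j, Q0 n z i j = 0 \/ Q0 n z i j = 1;
  o_P : forall z, opnorm1 (Q 1 z - Q0 1 z) <= eps;
  o_S : forall z n, (Nf z <= n)%N -> forall i j, colmap (Q0 n z) i = colmap (Q0 n z) j;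
  o_eps : 0 <= eps;
  o_Me : M%:R * eps <= 1/2;
  o_Vb : forall m, exists s, (m <= s)%N /\ (Nf (- s%:Z) <= M)%N;
  o_Vf : forall m, exists t, (m <= t)%N /\ (Nf t%:Z <= M)%N }.

Section Wrap.
Variables (R : realType) (k : nat) (hk : (0 < k)%N) (Q Q0 : nat -> int -> 'M[R]_k)
  (eps : R) (M : nat) (Nf : int -> nat).
Hypothesis H : OrbitOK Q Q0 eps M Nf.
Variable q0 : 'cV[R]_k.
Hypothesis hq0 : Sigma1p q0.

Lemma W_Conv : Conv (xs Q q0) (lx Q q0).
Proof. case: H => *; exact: (@Conv_xs R k hk Q Q0 eps M Nf). Qed.

Lemma W_comp i : (fun n => xs Q q0 n i 0) @ \oo --> lim ((fun n => xs Q q0 n i 0) @ \oo).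
Proof. case: H => *; exact: (@comp_xs R k hk Q Q0 eps M Nf). Qed.

Lemma W_Sigma : Sigma1p (lx Q q0).
Proof. case: H => *; exact: (@Sigma_lx R k hk Q Q0 eps M Nf). Qed.

Lemma W_pull (q : 'cV[R]_k) : Sigma1p q ->
  (fun n => norm1 (Q n (- n%:Z) *m q - lx Q q0)) @ \oo --> (0 : R).
Proof. case: H => *; exact: (@pull R k hk Q Q0 eps M Nf). Qed.

Lemma W_forward (q : 'cV[R]_k) : Sigma1p q ->
  (fun n => norm1 (Q n 0 *m q - Q n 0 *m lx Q q0)) @ \oo --> (0 : R).
Proof. case: H => *; exact: (@forward R k hk Q Q0 eps M Nf). Qed.

Lemma W_inv (a : nat) (l' : 'cV[R]_k) :
  Conv (fun n => Q n (a%:Z - n%:Z) *m q0) l' -> Q a 0 *m lx Q q0 = l'.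
Proof. case: H => *; exact: (@inv_abs R k hk Q Q0 eps M Nf). Qed.

Lemma W_close (s : nat) : (Nf (- s%:Z) <= s)%N ->
  norm1 (lx Q q0 - evec R (colmap (Q0 s (- s%:Z)) (Ordinal hk))) <= s%:R * eps.
Proof. case: H => *; exact: (@close R k hk Q Q0 eps M Nf). Qed.

End Wrap.

Section Meas.
Variable R : realType.
Variable d : measure_display.
Variable Omega : measurableType d.
Variable mu : probability Omega R.

Lemma mpre (f : Omega -> Omega) (A : set Omega) : measurable_fun setT f ->
  measurable A -> measurable (f @^-1` A).
Proof. by move=> mf mA; rewrite -[f @^-1` _]setTI; exact: mf. Qed.

Lemma miter (f : Omega -> Omega) n : measurable_fun setT f -> measurable_fun setT (iter n f).
Proof.
move=> mf; elim: n => [|n IH] /=; first exact: measurable_id.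
exact: (measurableT_comp mf IH).
Qed.

Definition mpres (f : Omega -> Omega) :=
  forall A, measurable A -> mu (f @^-1` A) = mu A.

Lemma pres_iter f n : measurable_fun setT f -> mpres f -> mpres (iter n f).
Proof.
move=> mf pf; elim: n => [|n IH] A mA //=.
have -> : (fun x => f (iter n f x)) @^-1` A = iter n f @^-1` (f @^-1` A) by [].
by rewrite IH ?pf //; exact: mpre.
Qed.

Lemma null_pre f (N : set Omega) : measurable_fun setT f -> mpres f ->
  measurable N -> mu N = 0%E -> mu.-negligible (f @^-1` N).
Proof.
move=> mf pf mN N0; exists (f @^-1` N); split => //; first exact: mpre.
by rewrite pf.
Qed.

Definition ergodic (f : Omega -> Omega) :=
  forall A, measurable A -> f @^-1` A = A -> mu A = 0%E \/ mu A = 1%E.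

Definition Vis (f : Omega -> Omega) (A : set Omega) :=
  \bigcap_m \bigcup_n (iter (n + m) f @^-1` A).

Lemma visits f A : measurable_fun setT f -> mpres f -> ergodic f ->
  measurable A -> (0 < mu A)%E -> measurable (Vis f A) /\ mu.-negligible (~` Vis f A).
Proof.
move=> mf pf ef mA A0.
have mit : forall n, measurable_fun setT (iter n f) by move=> n; exact: miter.
pose F m := \bigcap_n (iter (n + m) f @^-1` (~` A)).
have mF : forall m, measurable (F m).
  move=> m; apply: bigcapT_measurable => n; apply: mpre => //.
  exact: measurableC.
have eqC : ~` Vis f A = \bigcup_m F m.
  rewrite /Vis setC_bigcap; apply: eq_bigcupr => m _.
  by rewrite setC_bigcup.
have mU : measurable (\bigcup_m F m) by apply: bigcupT_measurable.
have mV : measurable (Vis f A).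
  by rewrite -[Vis f A]setCK eqC; apply: measurableC.
split => //.
rewrite eqC.
have ndF : nondecreasing_seq F.
  move=> m m' hm; rewrite subsetEset => w Fw n _.
  have := Fw (n + (m' - m))%N I; rewrite /=.
  by have -> : (n + (m' - m) + m = n + m')%N by lia.
have inv : f @^-1` (\bigcup_m F m) = \bigcup_m F m.
  apply/seteqP; split => w /=.
    move=> [m _ Fm]; exists m.+1 => // n _.
    have := Fm n I; by rewrite /= -iterSr addnS.
  move=> [m _ Fm]; exists m => // n _.
  have := ndF m m.+1 (leqnSn m); rewrite /= subsetEset => /(_ w Fm n I).
  by rewrite /= addnS iterSr.
have bnd : forall m, (mu (F m) <= mu (~` A))%E.
  move=> m; apply: (@le_trans _ _ (mu (iter m f @^-1` (~` A)))).
    apply: le_measure; rewrite ?inE //; first exact: mpre (measurableC mA).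
    by move=> w Fw; have := Fw 0%N I.
  by rewrite (pres_iter _ mf pf) //; exact: measurableC.
have cv := nondecreasing_cvg_mu (mu := mu) mF mU ndF.
have le1 : (mu (\bigcup_m F m) <= mu (~` A))%E.
  apply: (cvge_to_le cv).
  by apply: nearW => m; exact: bnd.
apply/negligibleP => //.
case: (ef _ mU inv) => // h1.
exfalso; move: le1; rewrite h1 probability_setC //.
move: A0; case: (mu A) => [r| |] //=; rewrite ?lte_fin ?lee_fin => r0.
  move=> h; clear - r0 h; lra.
Qed.

End Meas.

Section OrbOmega.
Variable R : realType.
Variable d : measure_display.
Variable Omega : measurableType d.
Variable mu : probability Omega R.
Variables theta thinv : Omega -> Omega.
Hypothesis mth : measurable_fun setT theta.
Hypothesis mthi : measurable_fun setT thinv.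
Hypothesis c1 : cancel theta thinv.
Hypothesis c2 : cancel thinv theta.
Hypothesis pres : forall A, measurable A -> mu (theta @^-1` A) = mu A.
Hypothesis erg : forall A, measurable A -> theta @^-1` A = A -> mu A = 0%E \/ mu A = 1%E.

Definition orbt (w : Omega) (z : int) : Omega :=
  match z with Posz n => iter n theta w | Negz n => iter n.+1 thinv w end.

Lemma orbtS w z : orbt w (z + 1) = theta (orbt w z).
Proof.
case: z => n.
  have -> : Posz n + 1 = Posz n.+1 by lia.
  reflexivity.
case: n => [|n].
  have -> : Negz 0 + 1 = Posz 0 by lia.
  by rewrite /= c2.
have -> : Negz n.+1 + 1 = Negz n by lia.
by rewrite /= c2.
Qed.

Lemma orbtP w z : orbt w (z - 1) = thinv (orbt w z).
Proof. by rewrite -[in RHS](subrK 1 z) orbtS c1. Qed.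

Lemma iter_orbt n w z : iter n theta (orbt w z) = orbt w (z + n%:Z).
Proof.
elim: n => [|n IH]; first by rewrite addr0.
by rewrite iterS IH -orbtS; congr orbt; lia.
Qed.

Lemma iterinv_orbt n w z : iter n thinv (orbt w z) = orbt w (z - n%:Z).
Proof.
elim: n => [|n IH]; first by rewrite subr0.
by rewrite iterS IH -orbtP; congr orbt; lia.
Qed.

Lemma orbt0 w : orbt w 0 = w.
Proof. by []. Qed.

Lemma orbtN n w : orbt w (- n%:Z) = iter n thinv w.
Proof. by rewrite -(orbt0 w) iterinv_orbt orbt0 sub0r. Qed.

Lemma orbt_orbt w a z : orbt (orbt w a) z = orbt w (a + z).
Proof.
case: z => n; first by rewrite /= iter_orbt.
have -> : orbt (orbt w a) (Negz n) = iter n.+1 thinv (orbt w a) by [].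
by rewrite iterinv_orbt; congr orbt; lia.
Qed.

Lemma morbt z : measurable_fun setT (fun w => orbt w z).
Proof. by case: z => n; apply: miter. Qed.

Lemma pres_thinv : mpres mu thinv.
Proof.
move=> A mA.
rewrite -pres; last exact: mpre.
congr (mu _); apply/seteqP; split => w /=; by rewrite c1.
Qed.

Lemma erg_thinv : ergodic mu thinv.
Proof.
move=> A mA hA; apply: erg => //.
apply/seteqP; split => w /=.
  move=> h; have : (thinv @^-1` A) (theta w) by rewrite hA.
  by rewrite /= c1.
move=> h; rewrite -hA /= c1 //.
Qed.

Definition GoodS (Nn : set Omega) :=
  \bigcap_n ((iter n theta @^-1` (~` Nn)) `&` (iter n thinv @^-1` (~` Nn))).

Lemma GoodS_meas Nn : measurable Nn -> measurable (GoodS Nn).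
Proof.
move=> mN; apply: bigcapT_measurable => n; apply: measurableI; apply: mpre;
  try exact: miter; exact: measurableC.
Qed.

Lemma GoodS_null Nn : measurable Nn -> mu Nn = 0%E -> mu.-negligible (~` GoodS Nn).
Proof.
move=> mN N0; rewrite /GoodS setC_bigcap; apply: negligible_bigcup => n.
rewrite setCI !preimage_setC !setCK; apply: negligibleU.
  apply: null_pre => //; [exact: miter | exact: pres_iter].
apply: null_pre => //; [exact: miter | apply: pres_iter => //; exact: pres_thinv].
Qed.

Lemma GoodS_orbt Nn w : GoodS Nn w -> forall z, ~ Nn (orbt w z).
Proof.
move=> h [] n.
  by have [] := h n I.
by have [] := h n.+1 I.
Qed.

Lemma GoodS_of Nn w : (forall z, ~ Nn (orbt w z)) -> GoodS Nn w.
Proof.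
move=> h n _; split => /=; first exact: (h (Posz n)).
rewrite -orbtN; exact: h.
Qed.

Lemma GoodS_shift Nn w a : GoodS Nn w -> GoodS Nn (iter a theta w).
Proof.
move=> h; apply: GoodS_of => z.
have -> : iter a theta w = orbt w a by [].
rewrite orbt_orbt; exact: GoodS_orbt.
Qed.

Lemma Visf_shift A w a : Vis theta A w -> Vis theta A (iter a theta w).
Proof.
move=> h m _; have [n _ hn] := h (m + a)%N I; exists n => //=.
by rewrite -iterD; have -> : (n + m + a = n + (m + a))%N by lia.
Qed.

Lemma Visb_shift A w a : Vis thinv A w -> Vis thinv A (iter a theta w).
Proof.
move=> h m _; have [n _ hn] := h m I; exists (n + a)%N => //=.
have -> : iter a theta w = orbt w a by [].
rewrite iterinv_orbt.
have -> : (a%:Z - (n + a + m)%N%:Z) = - (n + m)%N%:Z by lia.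
by rewrite orbtN.
Qed.

End OrbOmega.

Lemma ae_wit (R : realType) (d : measure_display) (Omega : measurableType d)
  (mu : probability Omega R) (P : Omega -> Prop) :
  {ae mu, forall w, P w} ->
  exists Nn, [/\ measurable Nn, mu Nn = 0%E & forall w, ~ Nn w -> P w].
Proof.
case=> Nn [mN N0 sub]; exists Nn; split => // w nw.
case: (pselect (P w)) => // np; exfalso; apply: nw; exact: sub.
Qed.

Lemma ae_of (R : realType) (d : measure_display) (Omega : measurableType d)
  (mu : probability Omega R) (G : set Omega) (P : Omega -> Prop) :
  mu.-negligible (~` G) -> (forall w, G w -> P w) -> {ae mu, forall w, P w}.
Proof.
move=> nG h; apply: (negligibleS _ nG) => w /= np Gw; apply: np; exact: h.
Qed.

Lemma norm1_le0 (R : realType) (k : nat) (v : 'cV[R]_k) : norm1 v <= 0 -> v = 0.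
Proof.
move=> h; apply/matrixP => i j; rewrite (ord1 j) mxE; apply/eqP.
rewrite -normr_le0; apply: le_trans h; exact: norm1_coord.
Qed.

Lemma pick_evec (R : realType) (k : nat) (j0 J : 'I_k) :
  odflt j0 [pick i | evec R J i 0 == 1] = J.
Proof.
case: pickP => [i /eqP|/(_ J)] /=; rewrite !mxE.
  by case: eqP => // _ /esym/eqP; rewrite oner_eq0.
by rewrite eqxx eqxx.
Qed.

Section Main.
Variable R : realType.
Variable d : measure_display.
Variable Omega : measurableType d.
Variable mu : probability Omega R.
Variables theta thinv : Omega -> Omega.
Variable k : nat.
Variables (P0 : nat -> Omega -> 'M[R]_k) (P : R -> nat -> Omega -> 'M[R]_k).
Hypothesis hk : (0 < k)%N.
Hypothesis mth : measurable_fun setT theta.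
Hypothesis mthi : measurable_fun setT thinv.
Hypothesis c1 : cancel theta thinv.
Hypothesis c2 : cancel thinv theta.
Hypothesis pres : forall A, measurable A -> mu (theta @^-1` A) = mu A.
Hypothesis erg : forall A, measurable A -> theta @^-1` A = A -> mu A = 0%E \/ mu A = 1%E.
Hypothesis aeP0 : {ae mu, forall w, [/\ forall n, column_stochastic (P0 n w),
                       P0 0%N w = 1%:M &
                       forall m n, P0 (m + n)%N w = P0 m (iter n theta w) *m P0 n w]}.
Hypothesis aeD : {ae mu, forall w, forall n i j, P0 n w i j = 0 \/ P0 n w i j = 1}.
Variable N : Omega -> nat.
Hypothesis mN : forall m, measurable (N @^-1` [set m]).
Hypothesis aeS : {ae mu, forall w, forall i j n, (N w <= n)%N ->
              DRN_map P0 n w i = DRN_map P0 n w j}.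
Hypothesis P00 : P 0 = P0.
Hypothesis hpert : forall eps, 0 <= eps ->
    MRN_cocycle mu theta (P eps) /\
    {ae mu, forall w, opnorm1 (P eps 1%N w - P0 1%N w) <= eps}.

Definition Props (eps : R) (u : Omega) :=
  [/\ forall n, column_stochastic (P eps n u), P eps 0%N u = 1%:M,
      forall m n, P eps (m + n)%N u = P eps m (iter n theta u) *m P eps n u &
      opnorm1 (P eps 1%N u - P0 1%N u) <= eps].

Lemma hexN : forall eps : R, exists Nn : set Omega, [/\ measurable Nn, mu Nn = 0%E &
  (0 <= eps -> forall w, ~ Nn w -> Props eps w)].
Proof.
move=> eps; case: (pselect (0 <= eps)) => he; last first.
  exists set0; split; [exact: measurable0 | exact: measure0 | by move=> /he].
have [[_ ae1] ae2] := hpert he.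
have [N1 [mN1 N10 h1]] := ae_wit ae1.
have [N2 [mN2 N20 h2]] := ae_wit ae2.
exists (N1 `|` N2); split.
- exact: measurableU.
- have n1 : mu.-negligible N1 by exists N1; split.
  have n2 : mu.-negligible N2 by exists N2; split.
  have mU : measurable (N1 `|` N2) by exact: measurableU.
  by move: (negligibleU n1 n2) => /(@negligibleP _ _ _ mu _ mU).
- move=> _ w nw.
  have [a b c] := h1 w (fun x => nw (or_introl x)).
  by split => //; apply: h2 => x; apply: nw; right.
Qed.


Local Notation orbw := (orbt theta thinv).

Definition Nfun : R -> set Omega := projT1 (choice hexN).
Lemma NfunP eps : [/\ measurable (Nfun eps), mu (Nfun eps) = 0%E &
  (0 <= eps -> forall w, ~ Nfun eps w -> Props eps w)].
Proof. exact: (projT2 (choice hexN) eps). Qed.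

Definition W0 := sval (cid (ae_wit aeP0)).
Definition WD := sval (cid (ae_wit aeD)).
Definition WS := sval (cid (ae_wit aeS)).
Lemma W0P : [/\ measurable W0, mu W0 = 0%E & forall w, ~ W0 w ->
  [/\ forall n, column_stochastic (P0 n w), P0 0%N w = 1%:M &
      forall m n, P0 (m + n)%N w = P0 m (iter n theta w) *m P0 n w]].
Proof. exact: (svalP (cid (ae_wit aeP0))). Qed.
Lemma WDP : [/\ measurable WD, mu WD = 0%E & forall w, ~ WD w ->
  forall n i j, P0 n w i j = 0 \/ P0 n w i j = 1].
Proof. exact: (svalP (cid (ae_wit aeD))). Qed.
Lemma WSP : [/\ measurable WS, mu WS = 0%E & forall w, ~ WS w ->
  forall i j n, (N w <= n)%N -> DRN_map P0 n w i = DRN_map P0 n w j].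
Proof. exact: (svalP (cid (ae_wit aeS))). Qed.

Definition Nall eps := W0 `|` WD `|` WS `|` Nfun eps.

Lemma null_meas (A : set Omega) : measurable A -> mu A = 0%E -> mu.-negligible A.
Proof. by move=> mA A0; exists A; split. Qed.

Lemma Nall_meas eps : measurable (Nall eps).
Proof.
case: W0P => ? _ _; case: WDP => ? _ _; case: WSP => ? _ _; case: (NfunP eps) => ? _ _.
by rewrite /Nall; repeat apply: measurableU.
Qed.

Lemma Nall_null eps : mu (Nall eps) = 0%E.
Proof.
case: W0P => ? ? _; case: WDP => ? ? _; case: WSP => ? ? _; case: (NfunP eps) => ? ? _.
apply/(@negligibleP _ _ _ mu _ (Nall_meas eps)).
by rewrite /Nall; repeat apply: negligibleU; apply: null_meas.
Qed.

Definition AM (m : nat) := [set w | (N w <= m)%N].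

Lemma AM_meas m : measurable (AM m).
Proof.
elim: m => [|m IH].
  have -> : AM 0 = N @^-1` [set 0%N].
    by apply/seteqP; split => w /=; rewrite /AM /= leqn0 => /eqP.
  exact: mN.
have -> : AM m.+1 = AM m `|` N @^-1` [set m.+1].
  apply/seteqP; split => w /=; rewrite /AM /=.
    by rewrite leq_eqVlt ltnS => /orP [/eqP ->|]; [right|left].
  by case => [h|->] //; apply: leqW.
exact: measurableU.
Qed.

Lemma exM : exists m, (0 < mu (AM m))%E.
Proof.
apply: contrapT => hn.
have h0 : forall m, mu.-negligible (AM m).
  move=> m; apply: null_meas; first exact: AM_meas.
  apply/eqP; rewrite eq_le measure_ge0 andbT leNgt; apply/negP => h.
  by apply: hn; exists m.
have : mu.-negligible (\bigcup_m AM m) by apply: negligible_bigcup.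
have -> : \bigcup_m AM m = setT.
  apply/seteqP; split => // w _; exists (N w) => //; by rewrite /AM /=.
move=> /(@negligibleP _ _ _ mu _ measurableT) hT0.
have h1 := probability_setT mu.
rewrite hT0 in h1; move: h1 => /eqP.
by rewrite eq_sym onee_eq0.
Qed.

Definition M := sval (cid exM).
Lemma MP : (0 < mu (AM M))%E.
Proof. exact: (svalP (cid exM)). Qed.

Definition Vf := Vis theta (AM M).
Definition Vb := Vis thinv (AM M).

Lemma VfP : measurable Vf /\ mu.-negligible (~` Vf).
Proof. exact: (visits mth pres erg (AM_meas M) MP). Qed.

Lemma VbP : measurable Vb /\ mu.-negligible (~` Vb).
Proof.
apply: (visits mthi _ _ (AM_meas M) MP).
  by apply: pres_thinv.
by apply: erg_thinv.
Qed.

Definition G eps := GoodS theta thinv (Nall eps) `&` Vf `&` Vb.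

Lemma G_meas eps : measurable (G eps).
Proof.
apply: measurableI; last exact: VbP.1.
apply: measurableI; last exact: VfP.1.
apply: GoodS_meas => //; exact: Nall_meas.
Qed.

Lemma G_null eps : mu.-negligible (~` G eps).
Proof.
rewrite /G !setCI; apply: negligibleU; last exact: VbP.2.
apply: negligibleU; last exact: VfP.2.
apply: GoodS_null => //; [exact: Nall_meas | exact: Nall_null].
Qed.

Lemma G_shift eps w a : G eps w -> G eps (iter a theta w).
Proof.
case=> [[h1 h2] h3]; split; [split|].
- exact: GoodS_shift.
- exact: Visf_shift.
- exact: (Visb_shift c1 c2).
Qed.


Definition Qw (eps : R) (w : Omega) : nat -> int -> 'M[R]_k := fun n z => P eps n (orbw w z).
Definition Q0w (w : Omega) : nat -> int -> 'M[R]_k := fun n z => P0 n (orbw w z).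

Lemma Nall_props eps u : 0 <= eps -> ~ Nall eps u ->
  [/\ Props eps u,
      [/\ forall n, column_stochastic (P0 n u), P0 0%N u = 1%:M &
      forall m n, P0 (m + n)%N u = P0 m (iter n theta u) *m P0 n u],
      (forall n i j, P0 n u i j = 0 \/ P0 n u i j = 1) &
      (forall i j n, (N u <= n)%N -> DRN_map P0 n u i = DRN_map P0 n u j)].
Proof.
move=> he nu; rewrite /Nall in nu.
case: W0P => _ _ h0; case: WDP => _ _ hD; case: WSP => _ _ hS; case: (NfunP eps) => _ _ hF.
split.
- by apply: hF => // x; apply: nu; right.
- by apply: h0 => x; apply: nu; left; left; left.
- by apply: hD => x; apply: nu; left; left; right.
- by apply: hS => x; apply: nu; left; right.
Qed.

Lemma OK eps w (Nf : int -> nat) : 0 <= eps -> M%:R * eps <= 1/2 -> G eps w ->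
  (forall z, (Nf z <= N (orbw w z))%N) ->
  (forall z n, (Nf z <= n)%N -> forall i j,
     colmap (P0 n (orbw w z)) i = colmap (P0 n (orbw w z)) j) ->
  OrbitOK (Qw eps w) (Q0w w) eps M Nf.
Proof.
move=> he hMe [[hg hvf] hvb] hN1 hN2.
have pr : forall z, _ := fun z => Nall_props he (GoodS_orbt hg (z:=z)).
split.
- move=> n z; have [[a _ _ _] _ _ _] := pr z; exact: a.
- by move=> z m n; have [[_ _ c _] _ _ _] := pr z; rewrite /Qw c (iter_orbt c2).
- move=> n z; have [_ [a _ _] _ _] := pr z; exact: a.
- by move=> z m n; have [_ [_ _ c] _ _] := pr z; rewrite /Q0w c (iter_orbt c2).
- by move=> z; have [[_ b _ _] _ _ _] := pr z.
- by move=> z; have [_ [_ b _] _ _] := pr z.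
- move=> n z i j; have [_ _ hd _] := pr z; exact: hd.
- by move=> z; have [[_ _ _ hp] _ _ _] := pr z.
- exact: hN2.
- exact: he.
- exact: hMe.
- move=> m; have [n _ hn] := hvb m I; exists (n + m)%N; split; first exact: leq_addl.
  have := hN1 (- (n + m)%N%:Z); rewrite (orbtN c1 c2) => h; exact: leq_trans h hn.
- move=> m; have [n _ hn] := hvf m I; exists (n + m)%N; split; first exact: leq_addl.
  have h := hN1 (n + m)%N; exact: leq_trans h hn.
Qed.

Lemma OK_std eps w : 0 <= eps -> M%:R * eps <= 1/2 -> G eps w ->
  OrbitOK (Qw eps w) (Q0w w) eps M (fun z => N (orbw w z)).
Proof.
move=> he hMe Gw; apply: OK => // z n hn i j.
have [[hg _] _] := Gw.
have [_ _ _ hS] := Nall_props he (GoodS_orbt hg (z:=z)).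
exact: hS.
Qed.

Definition j0 : 'I_k := Ordinal hk.
Definition q0 : 'cV[R]_k := evec R j0.
Lemma hq0 : Sigma1p q0.
Proof. exact: Sigma1p_evec. Qed.

Definition lime eps w := lx (Qw eps w) q0.
Definition base w := if w \in G 0 then lime 0 w else evec R j0.
Definition J w := odflt j0 [pick i | base w i 0 == 1].
Definition pe eps w := if w \in G eps then lime eps w else evec R (J w).

Lemma M0 : M%:R * (0 : R) <= 1/2.
Proof. rewrite mulr0; lra. Qed.

Lemma lime0 w s (Nf : int -> nat) : G 0 w ->
  (forall z, (Nf z <= N (orbw w z))%N) ->
  (forall z n, (Nf z <= n)%N -> forall i j,
     colmap (P0 n (orbw w z)) i = colmap (P0 n (orbw w z)) j) ->
  (Nf (- s%:Z) <= s)%N ->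
  lime 0 w = evec R (colmap (Q0w w s (- s%:Z)) j0) /\ J w = colmap (Q0w w s (- s%:Z)) j0.
Proof.
move=> Gw hN1 hN2 hs.
have ok := OK (le_refl 0) M0 Gw hN1 hN2.
have cl := W_close hk ok hq0 hs.
rewrite mulr0 in cl.
have e1 := norm1_le0 cl; move/eqP: e1; rewrite subr_eq0 => /eqP e1.
split => //.
rewrite /J /base; rewrite (mem_set Gw).
by rewrite /lime e1 pick_evec.
Qed.

Lemma base_evec w : base w = evec R (J w).
Proof.
case: (pselect (G 0 w)) => Gw; last first.
  rewrite /J /base; rewrite (memNset Gw).
  by rewrite pick_evec.
have ok := OK_std (le_refl 0) M0 Gw.
have [s [hs hNs]] := o_Vb ok M.
have [e1 e2] := lime0 Gw (fun z => leqnn _) (o_S ok) (leq_trans hNs hs).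
rewrite /base; rewrite (mem_set Gw).
by rewrite e1 e2.
Qed.


Lemma xs_meas eps n i : 0 <= eps ->
  measurable_fun setT (fun w => xs (Qw eps w) q0 n i 0).
Proof.
move=> he; have [[mP _] _] := hpert he.
have -> : (fun w => xs (Qw eps w) q0 n i 0) =
    (fun w => \sum_(j < k) P eps n (orbw w (- n%:Z)) i j * q0 j 0).
  by apply/funext => w; rewrite /xs /Qw mxE.
apply: measurable_sum => j; apply: measurable_funM; last exact: measurable_cst.
exact: (measurableT_comp (mP n i j) (morbt mth mthi _)).
Qed.

Lemma inG_meas eps : measurable_fun setT (fun w => w \in G eps).
Proof.
apply: (measurable_fun_bool true).
rewrite (_ : _ `&` _ = G eps); first exact: G_meas.
by apply/seteqP; split => w /=; [case => _ /set_mem | move=> h1; split => //; apply/mem_set].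
Qed.

Lemma lime_meas eps i (h : Omega -> R) : 0 <= eps -> M%:R * eps <= 1/2 ->
  measurable_fun setT h ->
  measurable_fun setT (fun w => if w \in G eps then lime eps w i 0 else h w).
Proof.
move=> he hMe mh.
apply: measurable_fun_if => //; first exact: inG_meas.
  rewrite (_ : _ `&` _ = G eps); last first.
    by apply/seteqP; split => w /=; [case => _ /set_mem | move=> h1; split => //; apply/mem_set].
  apply: (@measurable_fun_cvg _ _ _ _ (fun n w => xs (Qw eps w) q0 n i 0)).
    move=> n; apply: measurable_funS (xs_meas n i he) => //.
  move=> w Gw; rewrite /lime /lx /vlim mxE.
  exact: (W_comp hk (OK_std he hMe Gw) hq0).
apply: measurable_funS mh => //.
Qed.

Lemma base_meas i : measurable_fun setT (fun w => base w i 0).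
Proof.
have -> : (fun w => base w i 0) =
   (fun w => if w \in G 0 then lime 0 w i 0 else (cst (evec R j0 i 0) w)).
  by apply/funext => w; rewrite /base; case: ifP.
apply: lime_meas; [by [] | exact: M0 | exact: measurable_cst].
Qed.

Lemma J_meas j : measurable (J @^-1` [set j]).
Proof.
have -> : J @^-1` [set j] = (fun w => base w j 0) @^-1` [set 1].
  apply/seteqP; split => w /=.
    by move=> hj; rewrite base_evec mxE hj eqxx.
  rewrite base_evec mxE; case: eqP => [-> //|_ /eqP].
  by rewrite eq_sym oner_eq0.
rewrite -[_ @^-1` _]setTI; apply: base_meas => //; exact: measurable_set1.
Qed.

Lemma pe_meas eps i : 0 <= eps -> M%:R * eps <= 1/2 ->
  measurable_fun setT (fun w => pe eps w i 0).
Proof.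
move=> he hMe.
have -> : (fun w => pe eps w i 0) =
   (fun w => if w \in G eps then lime eps w i 0 else base w i 0).
  by apply/funext => w; rewrite /pe base_evec; case: ifP.
apply: lime_meas => //; exact: base_meas.
Qed.

Lemma pe_Sigma eps w : 0 <= eps -> M%:R * eps <= 1/2 -> Sigma1p (pe eps w).
Proof.
move=> he hMe; rewrite /pe; case: ifP => hw; last exact: Sigma1p_evec.
exact: (W_Sigma hk (OK_std he hMe (set_mem hw)) hq0).
Qed.

Lemma pe_inv eps w n : 0 <= eps -> M%:R * eps <= 1/2 -> G eps w ->
  P eps n w *m pe eps w = pe eps (iter n theta w).
Proof.
move=> he hMe Gw.
have Gn := G_shift n Gw.
rewrite /pe (mem_set Gw) (mem_set Gn).
have ok := OK_std he hMe Gw.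
have okn := OK_std he hMe Gn.
apply: (W_inv hk ok hq0 (a := n)).
apply: (Conv_ext (n1 := 0%N) _ (W_Conv hk okn hq0)) => m _.
rewrite /xs /Qw; congr (P eps m _ *m q0).
have -> : iter n theta w = orbw w n by [].
by rewrite (orbt_orbt c1 c2).
Qed.

Lemma pe_pull eps w q : 0 <= eps -> M%:R * eps <= 1/2 -> G eps w -> Sigma1p q ->
  (fun n => norm1 (P eps n (iter n thinv w) *m q - pe eps w)) @ \oo --> (0 : R).
Proof.
move=> he hMe Gw hq.
rewrite /pe (mem_set Gw).
have ok := OK_std he hMe Gw.
have -> : (fun n => norm1 (P eps n (iter n thinv w) *m q - lime eps w)) =
    (fun n => norm1 (Qw eps w n (- n%:Z) *m q - lx (Qw eps w) q0)).
  by apply/funext => n; rewrite /Qw (orbtN c1 c2).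
exact: (W_pull hk ok hq0 hq).
Qed.

Lemma pe_forward eps w q : 0 <= eps -> M%:R * eps <= 1/2 -> G eps w -> Sigma1p q ->
  (fun n => norm1 (P eps n w *m q - pe eps (iter n theta w))) @ \oo --> (0 : R).
Proof.
move=> he hMe Gw hq.
have -> : (fun n => norm1 (P eps n w *m q - pe eps (iter n theta w))) =
    (fun n => norm1 (Qw eps w n 0 *m q - Qw eps w n 0 *m lx (Qw eps w) q0)).
  apply/funext => n; rewrite -(pe_inv n he hMe Gw) /pe (mem_set Gw).
  by [].
exact: (W_forward hk (OK_std he hMe Gw) hq0 hq).
Qed.

Lemma pe_close eps w s (Nf : int -> nat) : 0 <= eps -> M%:R * eps <= 1/2 -> G 0 w ->
  (forall z, (Nf z <= N (orbw w z))%N) ->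
  (forall z n, (Nf z <= n)%N -> forall i j,
     colmap (P0 n (orbw w z)) i = colmap (P0 n (orbw w z)) j) ->
  (Nf (- s%:Z) <= s)%N ->
  norm1 (pe eps w - evec R (J w)) <= s%:R * eps.
Proof.
move=> he hMe G0w hN1 hN2 hs.
have [_ eJ] := lime0 G0w hN1 hN2 hs.
rewrite /pe; case: ifP => hw; last first.
  rewrite subrr.
  have -> : norm1 (0 : 'cV[R]_k) = 0.
    by rewrite /norm1 big1 // => i _; rewrite mxE normr0.
  by apply: mulr_ge0.
have ok := OK he hMe (set_mem hw) hN1 hN2.
rewrite eJ; exact: (W_close hk ok hq0 hs).
Qed.


Lemma final :
  exists (eps1 : R) (p : R -> Omega -> 'cV[R]_k),
    0 < eps1 /\
    (forall eps, 0 <= eps -> eps < eps1 ->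
       [/\ invariant_distribution mu theta (P eps) (p eps),
           (forall q : 'cV[R]_k, Sigma1p q ->
              {ae mu, forall w,
                 (fun n => norm1 (P eps n (iter n thinv w) *m q - p eps w))
                   @ \oo --> (0 : R)}) &
           (forall q : 'cV[R]_k, Sigma1p q ->
              {ae mu, forall w,
                 (fun n => norm1 (P eps n w *m q - p eps (iter n theta w)))
                   @ \oo --> (0 : R)})]) /\
    exists J : Omega -> 'I_k,
      (forall j, measurable (J @^-1` [set j])) /\
      {ae mu, forall w,
         p 0 w = evec R (J w) /\
         (forall delta : R, 0 < delta -> exists eta : R, 0 < eta /\
            forall eps, 0 <= eps -> eps < eta -> eps < eps1 ->
              norm1 (p eps w - evec R (J w)) < delta)} /\
      (uniformly_synchronized mu P0 ->
         exists A : set Omega, measurable A /\ mu A = 1%E /\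
           forall delta : R, 0 < delta -> exists eta : R, 0 < eta /\
             forall eps w, A w -> 0 <= eps -> eps < eta -> eps < eps1 ->
               norm1 (p eps w - evec R (J w)) < delta).
Proof.
pose eps1 : R := (2 * (M.+1)%:R)^-1.
have hM1 : (M.+1)%:R = M%:R + 1 :> R by rewrite -natr1.
have hM0 : 0 <= M%:R :> R by [].
have eps1_pos : 0 < eps1 by rewrite /eps1 invr_gt0 mulr_gt0.
have small : forall eps, 0 <= eps -> eps < eps1 -> M%:R * eps <= 1/2.
  move=> eps he; rewrite /eps1 -div1r ltr_pdivlMr; last by rewrite mulr_gt0.
  rewrite hM1 => h; nra.
have key : forall (s : nat) (eps delta : R), 0 <= eps -> 0 < delta ->
    eps < delta / (s.+1)%:R -> s%:R * eps < delta.
  move=> s eps delta he dpos; rewrite ltr_pdivlMr // -natr1 => h.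
  have : 0 <= s%:R :> R by [].
  nra.
exists eps1, pe; split; first exact: eps1_pos.
split.
  move=> eps he hlt; have hMe := small eps he hlt.
  split.
  - split; first by move=> i; exact: pe_meas.
    split; first by move=> w; exact: pe_Sigma.
    apply: (ae_of (G_null eps)) => w Gw n; exact: pe_inv.
  - move=> q hq; apply: (ae_of (G_null eps)) => w Gw; exact: pe_pull.
  - move=> q hq; apply: (ae_of (G_null eps)) => w Gw; exact: pe_forward.
exists J; split; first exact: J_meas.
split.
  apply: (ae_of (G_null 0)) => w G0w; split.
    rewrite /pe (mem_set G0w); have := base_evec w.
    by rewrite /base (mem_set G0w).
  move=> delta dpos.
  have ok := OK_std (le_refl 0) M0 G0w.
  have [s [hs hNs]] := o_Vb ok M.
  exists (delta / (s.+1)%:R); split; first by rewrite divr_gt0.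
  move=> eps he heta h1.
  have hMe := small eps he h1.
  have := pe_close he hMe G0w (fun z => leqnn _) (o_S ok) (leq_trans hNs hs).
  move=> /le_lt_trans; apply; exact: key.
case=> Nu aeU.
have [WU [mWU WU0 hWU]] := ae_wit aeU.
pose A := G 0 `&` (iter Nu thinv @^-1` (~` WU)).
have mA : measurable A.
  apply: measurableI; first exact: G_meas.
  apply: mpre; [exact: miter | exact: measurableC].
have nA : mu.-negligible (~` A).
  rewrite /A setCI preimage_setC setCK; apply: negligibleU; first exact: G_null.
  apply: null_pre => //; first exact: miter.
  apply: pres_iter => //; exact: pres_thinv.
exists A; split => //; split.
  have h0 : mu (~` A) = 0%E by apply/(@negligibleP _ _ _ mu _ (measurableC mA)).
  move: h0; rewrite probability_setC //.
  have := probability_le1 mu mA; have := measure_ge0 mu A.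
  case: (mu A) => [r| |] //=; rewrite ?lee_fin => r0 r1.
  move=> /eqP; rewrite -EFinB eqe subr_eq0 => /eqP <- //.
move=> delta dpos; exists (delta / (Nu.+1)%:R); split; first by rewrite divr_gt0.
move=> eps w [G0w hwu] he heta h1.
have hMe := small eps he h1.
have [[hg _] _] := G0w.
pose Nf := fun z => if pselect (~ WU (orbw w z)) is left _ then minn (N (orbw w z)) Nu
                    else N (orbw w z).
have hN1 : forall z, (Nf z <= N (orbw w z))%N.
  by move=> z; rewrite /Nf; case: pselect => _ //; exact: geq_minl.
have hN2 : forall z n, (Nf z <= n)%N -> forall i j,
     colmap (P0 n (orbw w z)) i = colmap (P0 n (orbw w z)) j.
  move=> z n; rewrite /Nf.
  have [_ _ _ hS] := Nall_props (le_refl 0) (GoodS_orbt hg (z:=z)).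
  case: pselect => [nw|_] hn i j; last exact: hS.
  case: (leqP (N (orbw w z)) n) => hNn; first exact: hS.
  apply: (hWU _ nw) => //.
  move: hn hNn; clear; lia.
have hs : (Nf (- Nu%:Z) <= Nu)%N.
  rewrite /Nf; case: pselect => [_|hn]; first exact: geq_minr.
  by exfalso; apply: hn; rewrite (orbtN c1 c2).
have := pe_close he hMe G0w hN1 hN2 hs.
move=> /le_lt_trans; apply; exact: key.
Qed.

End Main.

Theorem theoremA (R : realType) (d : measure_display) (Omega : measurableType d)
  (mu : probability Omega R) (theta theta_inv : Omega -> Omega) (k : nat)
  (P0 : nat -> Omega -> 'M[R]_k) (P : R -> nat -> Omega -> 'M[R]_k) :
  (2 <= k)%N ->
  @standard_borel R d Omega ->
  metric_dynamical_system mu theta theta_inv ->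
  DRN_cocycle mu theta P0 ->
  synchronized mu P0 ->
  markov_perturbation mu theta P0 P ->
  exists (eps1 : R) (p : R -> Omega -> 'cV[R]_k),
    0 < eps1 /\
    (forall eps, 0 <= eps -> eps < eps1 ->
       [/\ invariant_distribution mu theta (P eps) (p eps),
           (* (i) pull-back attraction *)
           (forall q : 'cV[R]_k, Sigma1p q ->
              {ae mu, forall w,
                 (fun n => norm1 (P eps n (iter n theta_inv w) *m q - p eps w))
                   @ \oo --> (0 : R)}) &
           (* (ii) forward attraction *)
           (forall q : 'cV[R]_k, Sigma1p q ->
              {ae mu, forall w,
                 (fun n => norm1 (P eps n w *m q - p eps (iter n theta w)))
                   @ \oo --> (0 : R)})]) /\
    (* (iii) continuity at eps = 0 *)
    exists J : Omega -> 'I_k,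
      (forall j, measurable (J @^-1` [set j])) /\
      {ae mu, forall w,
         p 0 w = evec R (J w) /\
         (forall delta : R, 0 < delta -> exists eta : R, 0 < eta /\
            forall eps, 0 <= eps -> eps < eta -> eps < eps1 ->
              norm1 (p eps w - evec R (J w)) < delta)} /\
      (* uniform convergence under uniform synchronization *)
      (uniformly_synchronized mu P0 ->
         exists A : set Omega, measurable A /\ mu A = 1%E /\
           forall delta : R, 0 < delta -> exists eta : R, 0 < eta /\
             forall eps w, A w -> 0 <= eps -> eps < eta -> eps < eps1 ->
               norm1 (p eps w - evec R (J w)) < delta).
Proof.
move=> hk2 _ [mth mthi [c1 c2] pres erg] [[mP0 aeP0] aeD] [N [mN aeS]] [P00 hpert].
have hk : (0 < k)%N by apply: ltnW.
exact: (final hk mth mthi c1 c2 pres erg aeP0 aeD mN aeS hpert).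
Qed.
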